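(* Let $W_\Gamma$ be a graph product on a finite graph $\Gamma=(V,E)$ with every vertex group primary or infinite cyclic. Let $M,N$ be two $\sim_\tau$-equivalence classes such that $W_{\Gamma_N}$ is not a free group of rank $k\ge 2$. If $N\cap L_M\ne\emptyset$, then $N\subset L_M$.
   Context: Graph: $\Gamma=(V,E)$, $V$ non-empty finite, $E$ a set of 2-element subsets; $lk(v)=\{x:\{v,x\}\in E\}$, $st(v)=lk(v)\cup\{v\}$; $W_{\Gamma_N}$ is the subgroup generated by the vertex groups $G_v$, $v\in N$. A group is primary if cyclic of order $p^k$, $p$ prime, $k\ge1$. Relation $\le_\tau$ on $V$: $v\le_\tau v$; for $v\neq w$, $v\le_\tau w$ iff either (a) $|G_v|=\infty$ and $lk(v)\subset st(w)$, or (b) $|G_v|=p^k$, $|G_w|=p^\ell$ for the same prime $p$ and $st(v)\subset st(w)$; $v\sim_\tau w$ iff $v\le_\tau w$ and $w\le_\tau v$. For $M\subset V$, $L_M=V\setminus\bigcup_{w\in M}st(w)$. *)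

(* Defs.v *)
From mathcomp Require Import all_boot.
Set Implicit Arguments. Unset Strict Implicit. Unset Printing Implicit Defensive.

Record group := Group {
  gcar :> Type;
  gmul : gcar -> gcar -> gcar;
  ginv : gcar -> gcar;
  gone : gcar;
  gmulA : forall x y z, gmul x (gmul y z) = gmul (gmul x y) z;
  gmul1g : forall x, gmul gone x = x;
  gmulVg : forall x, gmul (ginv x) x = gone
}.
Arguments gmul {g}. Arguments ginv {g}. Arguments gone {g}.

Fixpoint gpow (G : group) (x : G) (n : nat) : G :=
  match n with 0 => gone | n'.+1 => gmul x (gpow x n') end.

Definition is_hom (G H : group) (f : G -> H) : Prop :=
  forall x y, f (gmul x y) = gmul (f x) (f y).

(* words over an alphabet I: letter (i, false) = x_i, (i, true) = x_i^-1 *)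
Definition evalw (I : Type) (G : group) (f : I -> G) (w : seq (I * bool)) : G :=
  foldr (fun a acc => gmul (if a.2 then ginv (f a.1) else f a.1) acc) gone w.

(* freely reduced word: no two consecutive mutually inverse letters *)
Definition reduced_word (I : eqType) (w : seq (I * bool)) : bool :=
  sorted (fun a b => ~~ ((a.1 == b.1) && (a.2 != b.2))) w.

(* Every vertex group is cyclic (primary or infinite cyclic), hence determined
   by its order  o v : nat , with the convention  o v = 0  <-> infinite cyclic. *)
Definition primary_order (n : nat) : Prop :=
  exists p k, prime p /\ 0 < k /\ n = p ^ k.

Definition lk (V : finType) (e : rel V) (v : V) : {set V} := [set x | e v x].
Definition st (V : finType) (e : rel V) (v : V) : {set V} := v |: lk e v.

(* Graph product W_Gamma of the cyclic groups <x_v | x_v^(o v)> (no relation when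
   o v = 0), given by its universal property: generators g v satisfy the relations
   of the presentation, and every family in another group satisfying them extends
   uniquely to a homomorphism. *)
Definition gp_relations (V : finType) (e : rel V) (o : V -> nat)
    (H : group) (h : V -> H) : Prop :=
  (forall v, 0 < o v -> gpow (h v) (o v) = gone) /\
  (forall v w, e v w -> gmul (h v) (h w) = gmul (h w) (h v)).

Definition is_graph_product (V : finType) (e : rel V) (o : V -> nat)
    (W : group) (g : V -> W) : Prop :=
  gp_relations e o g /\
  forall (H : group) (h : V -> H), gp_relations e o h ->
    exists f : W -> H, [/\ is_hom f, (forall v, f (g v) = h v) &
      forall f' : W -> H, is_hom f' -> (forall v, f' (g v) = h v) ->
        forall x, f' x = f x].

(* W_{Gamma_N}: the subgroup of W generated by the g v, v in N *)
Definition in_gen_subgroup (V : finType) (W : group) (g : V -> W) (N : {set V})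
    (x : W) : Prop :=
  exists w : seq (V * bool), all (fun a => a.1 \in N) w /\ evalw g w = x.

Definition free_of_rank (W : group) (S : W -> Prop) (k : nat) : Prop :=
  exists b : 'I_k -> W,
    [/\ forall i, S (b i),
        forall x, S x -> exists w, evalw b w = x &
        forall w : seq ('I_k * bool), reduced_word w -> w != [::] ->
          evalw b w <> gone].

Definition tau_le (V : finType) (e : rel V) (o : V -> nat) (v w : V) : Prop :=
  v = w \/
  (v <> w /\
   ((o v = 0 /\ lk e v \subset st e w) \/
    ((exists p k l, [/\ prime p, 0 < k, 0 < l, o v = p ^ k & o w = p ^ l]) /\
     st e v \subset st e w))).

Definition tau_equiv (V : finType) (e : rel V) (o : V -> nat) (v w : V) : Prop :=
  tau_le e o v w /\ tau_le e o w v.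

Definition is_tau_class (V : finType) (e : rel V) (o : V -> nat) (M : {set V}) : Prop :=
  exists v, forall w, w \in M <-> tau_equiv e o v w.

Definition LM (V : finType) (e : rel V) (M : {set V}) : {set V} :=
  ~: \bigcup_(w in M) st e w.

(* Main.v *)
Require Import Defs.
From mathcomp Require Import all_boot.

Lemma inst (V : finType) (e : rel V) v x : (x \in st e v) = (x == v) || e v x.
Proof. by rewrite /st /lk !inE. Qed.

Lemma tle_lk {V : finType} {e : rel V} {o x y} :
  tau_le e o x y -> lk e x \subset st e y.
Proof.
case=> [->|[_ [[_ H]|[_ H]]]] //.
- by apply/subsetP=> z; rewrite inst /lk inE => ->; rewrite orbT.
- by apply: subset_trans H; apply/subsetP=> z; rewrite inst /lk inE => ->; rewrite orbT.
Qed.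

Lemma lk_trans {V : finType} {e : rel V} (He_sym : symmetric e) {u v w} :
  lk e u \subset st e v -> lk e v \subset st e w -> lk e u \subset st e w.
Proof.
move=> /subsetP H1 /subsetP H2; apply/subsetP=> x Hx.
have := H1 x Hx; rewrite inst => /orP[/eqP Exv|Hvx].
- subst x.
  have Hu : u \in st e w by apply: H2; rewrite /lk inE He_sym; rewrite /lk inE in Hx.
  rewrite inst in Hu; case/orP: Hu => [/eqP Euw|Hwu].
  + by subst u; rewrite inst; rewrite /lk inE in Hx; rewrite Hx orbT.
  + have := H1 w; rewrite /lk inE He_sym => /(_ Hwu); rewrite inst => /orP[/eqP->|Hvw].
    * by rewrite inst eqxx.
    * by rewrite inst He_sym Hvw orbT.
- by apply: H2; rewrite /lk inE.
Qed.

Lemma prime_pow_eq p q k l : prime p -> prime q -> 0 < k -> p ^ k = q ^ l -> p = q.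
Proof.
move=> pp pq k0 E.
have : p %| q ^ l by rewrite -E dvdn_exp.
rewrite Euclid_dvdX // => /andP[H _].
by move: H; rewrite dvdn_prime2 // => /eqP.
Qed.

Lemma tle_trans {V : finType} {e : rel V} (He_sym : symmetric e) {o u v w} :
  tau_le e o u v -> tau_le e o v w -> tau_le e o u w.
Proof.
move=> H1 H2.
case: (eqVneq u w) => [->|nuw]; first by left.
case: H1 => [->|[nuv H1]] //.
case: H2 => [<-|[nvw H2]]; first by right.
right; split; first by apply/eqP.
case: H1 => [[ou Hl]|[[p [k [l [pp k0 l0 ou ov]]]] Hs]].
- left; split => //; apply: (lk_trans He_sym Hl).
  by apply: (tle_lk (o:=o)); right; split.
- right; case: H2 => [[ov' _]|[[p' [k' [l' [pp' k0' l0' ov2 ow]]]] Hs']].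
  + by move: ov; rewrite ov' => /esym/eqP; rewrite expn_eq0 eqn0Ngt prime_gt0.
  + have Epp : p = p' by apply: (prime_pow_eq _ _ _ k' pp pp' l0); rewrite -ov ov2.
    subst p'; split; first by exists p, k, l'.
    exact: subset_trans Hs Hs'.
Qed.

Theorem lemma6p9 (V : finType) (e : rel V) (He_sym : symmetric e)
    (He_irr : irreflexive e) (o : V -> nat)
    (Ho : forall v, o v = 0 \/ primary_order (o v))
    (W : group) (g : V -> W) (HW : is_graph_product e o g)
    (M N : {set V}) (HM : is_tau_class e o M) (HN : is_tau_class e o N)
    (Hfree : ~ (exists k, 2 <= k /\ free_of_rank (in_gen_subgroup g N) k)) :
  N :&: LM e M != set0 -> N \subset LM e M.
Proof.
case/set0Pn=> v; rewrite inE => /andP[vN vL].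
have vnot : forall m, m \in M -> v \notin st e m.
  move=> m mM; apply/negP=> H; move: vL; rewrite /LM inE => /bigcupP; apply.
  by exists m.
have vnM : v \notin M by apply/negP=> vM; have := vnot v vM; rewrite inst eqxx.
case: HM => a Ha; case: HN => b Hb.
have sym : forall x y, tau_equiv e o x y -> tau_equiv e o y x by move=> x y [].
have tr : forall x y z, tau_equiv e o x y -> tau_equiv e o y z -> tau_equiv e o x z.
  move=> x y z [h1 h2] [h3 h4]; split; [exact: tle_trans h1 h3|exact: tle_trans h4 h2].
apply/subsetP=> w wN; rewrite /LM inE; apply/negP=> /bigcupP[m mM wm].
have vw : tau_equiv e o w v by apply: (tr _ b); [apply: sym; apply/Hb|apply/Hb].
rewrite inst in wm; case/orP: wm => [/eqP Ewm|Emw].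
- subst w; apply/negP: vnM; apply/negPn/Ha.
  by apply: (tr _ m); [apply/Ha|].
- have := subsetP (tle_lk vw.1) m; rewrite /lk inE He_sym => /(_ Emw).
  rewrite inst => /orP[/eqP Emv|Evm].
  + by subst m; rewrite mM in vnM.
  + by have := vnot m mM; rewrite inst He_sym Evm orbT.
Qed.
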